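(* Let $n\geq 3$ be an integer and let $$\mathcal P_n=\Big\{(\kappa,\lambda)\in\mathbb R^2:\ \kappa\sin(x)+\sum_{k=2}^{n-1}\sin(kx)+\lambda\sin(nx)\geq 0\ \text{for all } x\in[0,\pi]\Big\}.$$ For every $\lambda\in\mathbb R$ there exists $\kappa_0=\kappa_0(\lambda;n)$ such that $(\kappa,\lambda)\in\mathcal P_n$ if and only if $\kappa\geq\kappa_0$. Moreover: (i) If $n$ is odd, then $\kappa_0=\frac{n+1}{2}-n\lambda$ for $\lambda\in\big(-\infty,\frac{2n-3}{4n}\big]$; $\kappa_0>\frac{n+1}{2}-n\lambda$ for $\lambda\in\big(\frac{2n-3}{4n},\frac12\big]$; and $\kappa_0>1$ for $\lambda\in\big(\frac12,\infty\big)$. (ii) If $n$ is even, then $\kappa_0>1$ for $\lambda\in\big(-\infty,\frac12\big)$, and $\kappa_0=n\lambda-\frac{n-2}{2}$ for $\lambda\in\big[\frac12,\infty\big)$. *)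

(* Defs.v *)
From Stdlib Require Import Reals Arith.
Open Scope R_scope.

(* mid_sin_sum n x = sum_{k=2}^{n-1} sin (k x)  (empty sum = 0) *)
Fixpoint mid_sin_sum (n : nat) (x : R) : R :=
  match n with
  | O => 0
  | S m => mid_sin_sum m x + (if (2 <=? m)%nat then sin (INR m * x) else 0)
  end.

Definition trig_poly (n : nat) (kappa lambda x : R) : R :=
  kappa * sin x + mid_sin_sum n x + lambda * sin (INR n * x).

Definition in_Pn (n : nat) (kappa lambda : R) : Prop :=
  forall x : R, 0 <= x <= PI -> 0 <= trig_poly n kappa lambda x.

(* Main.v *)
Require Import Defs.
From Stdlib Require Import Reals Arith Lra Lia Psatz.
Open Scope R_scope.

Lemma sin_lb3 a : 0 <= a -> a <= PI -> a - a^3/6 <= sin a.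
Proof. intros H1 H2. destruct (sin_bound a 0 H1 H2) as [H _].
 unfold sin_approx, sin_term in H. simpl in H. lra. Qed.
Lemma sin_ub5 a : 0 <= a -> a <= PI -> sin a <= a - a^3/6 + a^5/120.
Proof. intros H1 H2. destruct (sin_bound a 0 H1 H2) as [_ H].
 unfold sin_approx, sin_term in H. simpl in H. lra. Qed.
Lemma cos_lb6 a : - PI/2 <= a -> a <= PI/2 -> 1 - a^2/2 + a^4/24 - a^6/720 <= cos a.
Proof. intros H1 H2. destruct (cos_bound a 1 H1 H2) as [H _].
 unfold cos_approx, cos_term in H. simpl in H. lra. Qed.
Lemma cos_ub4 a : - PI/2 <= a -> a <= PI/2 -> cos a <= 1 - a^2/2 + a^4/24.
Proof. intros H1 H2. destruct (cos_bound a 0 H1 H2) as [_ H].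
 unfold cos_approx, cos_term in H. simpl in H. lra. Qed.

Lemma key_P n h : (3 <= n)%nat -> 0 < h < PI/2 ->
  0 <= INR n * sin h * (cos h ^2 + 2 * cos (INR n * h) ^2)
       - 3 * sin (INR n * h) * cos (INR n * h) * cos h.
Proof.
  intros Hn Hh.
  assert (HN : 3 <= INR n) by (replace 3 with (INR 3) by (simpl; lra); apply le_INR; lia).
  pose proof PI2_3_2 as Pl. pose proof PI_4 as Pu.
  set (N := INR n) in *. set (y := N * h).
  assert (Hy : 3 * h <= y) by (unfold y; nra).
  assert (hy : 0 < y) by (unfold y; nra).
  assert (Hs : 0 < sin h) by (apply sin_gt_0; lra).
  assert (Hc : 0 < cos h) by (apply cos_gt_0; lra).
  assert (Hsl := sin_lb3 h ltac:(lra) ltac:(lra)).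
  assert (Hcu := cos_ub4 h ltac:(lra) ltac:(lra)).
  set (s := sin h) in *. set (c := cos h) in *.
  set (a := sin y). set (b := cos y).
  assert (Hab : a^2 + b^2 = 1) by (unfold a, b; rewrite <- (sin2_cos2 y); unfold Rsqr; ring).
  assert (Hb1 : b^2 <= 1) by nra.
  assert (Ha1 : a^2 <= 1) by nra.
  assert (Hgen : 14/5 * Rabs b * c <= c^2 + 2*b^2).
  { assert (Rabs b ^2 = b^2) by apply pow2_abs.
    assert (0 <= (c - 7/5*Rabs b)^2) by apply pow2_ge_0. nra. }
  assert (Habs : a * b * c <= Rabs a * Rabs b * c).
  { assert (a * b <= Rabs a * Rabs b) by (rewrite <- Rabs_mult; apply Rle_abs). nra. }
  assert (Hba := Rabs_pos b). assert (Haa := Rabs_pos a).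
  assert (Hns : y - y * h^2 / 6 <= N * s) by (unfold y; nra).
  destruct (Rle_lt_dec y (7/10)) as [R2 | R2].
  -
    assert (Hsc : 2*h - (2*h)^3/6 <= 2 * s * c).
    { replace (2*s*c) with (sin (2*h)) by (unfold s, c; rewrite sin_2a; ring).
      apply sin_lb3; lra. }
    assert (Htan : (h + h^3/3) * c <= s).
    { assert (h <= 1) by lra.
      assert ((h + h^3/3) * c <= (h + h^3/3) * (1 - h^2/2 + h^4/24)).
      { apply Rmult_le_compat_l; [|lra]. assert (0 <= h^3) by (apply pow_le; lra). lra. }
      assert ((h + h^3/3) * (1 - h^2/2 + h^4/24) <= h - h^3/6).
      { assert (E : h - h^3/6 - (h + h^3/3) * (1 - h^2/2 + h^4/24) = h^5 * (1/8 - h^2/72)) by field.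
        assert (0 <= h^5) by (apply pow_le; lra).
        assert (0 <= h^5 * (1/8 - h^2/72)) by (apply Rmult_le_pos; nra). lra. }
      lra. }
    assert (Hs2y := sin_ub5 (2*y) ltac:(lra) ltac:(lra)).
    assert (Hc2y := cos_lb6 (2*y) ltac:(lra) ltac:(lra)).
    replace (sin (2*y)) with (2*a*b) in Hs2y by (unfold a, b; rewrite sin_2a; ring).
    replace (cos (2*y)) with (2*b^2-1) in Hc2y by (unfold b; rewrite cos_2a_cos; ring).
    assert (Ha0 : 0 <= a) by (apply sin_ge_0; lra).
    assert (Hay : a <= y) by (left; apply sin_lt_x; lra).
    assert (HL : 4/15*y^5 - 4/45*y^7 <= y*(1+2*b^2) - 3*a*b).
    { assert (y * (1 - (2*y)^2/2 + (2*y)^4/24 - (2*y)^6/720) <= y * (2*b^2-1)) by (apply Rmult_le_compat_l; lra).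
      assert (E2 : y*(1+2*b^2) - 3*a*b - (4/15*y^5 - 4/45*y^7) =
         (y * (2*b^2-1) - y * (1 - (2*y)^2/2 + (2*y)^4/24 - (2*y)^6/720))
         + 3/2 * ((2*y) - (2*y)^3/6 + (2*y)^5/120 - 2*a*b)) by field.
      lra. }
    assert (Hstep : c * (y*(1+2*b^2) - 3*a*b - 2/3*y*h^2*a^2) <=
        N * s * (c ^2 + 2 * b ^2) - 3 * a * b * c).
    { assert (N * c * (h - 2*h^3/3) <= N * s * c^2).
      { assert (h - 2*h^3/3 <= s * c) by lra.
        replace (N * s * c^2) with (N * c * (s * c)) by ring.
        apply Rmult_le_compat_l; [nra|lra]. }
      assert (2 * N * b^2 * ((h + h^3/3) * c) <= 2 * N * s * b^2).
      { replace (2 * N * s * b^2) with (2 * N * b^2 * s) by ring.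
        apply Rmult_le_compat_l; [nra|lra]. }
      assert (E : c*(y*(1+2*b^2) - 3*a*b - 2/3*y*h^2*a^2) = N*c*(h-2*h^3/3) + 2*N*b^2*((h+h^3/3)*c) - 3*a*b*c - 2/3*N*h^3*c*(a^2+b^2-1)) by (unfold y; field).
      rewrite Hab in E. lra. }
    assert (H3 : 2/3*y*h^2*a^2 <= 2/27 * y^5).
    { assert (h^2 <= y^2/9) by nra. assert (a^2 <= y^2) by nra.
      assert (h^2 * a^2 <= y^2/9 * y^2) by nra. nra. }
    assert (H4 : 0 <= 4/15*y^5 - 4/45*y^7 - 2/27*y^5).
    { assert (0 <= y^5) by (apply pow_le; lra).
      replace (4/15*y^5 - 4/45*y^7 - 2/27*y^5) with (y^5 * (26/135 - 4/45 * y^2)) by field.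
      apply Rmult_le_pos; nra. }
    nra.
  - assert (Fin : 15/14 * Rabs a <= N * s -> 0 <= N * s * (c ^2 + 2 * b ^2) - 3 * a * b * c).
    { intro H1.
      assert (N * s * (14/5 * Rabs b * c) <= N * s * (c^2 + 2*b^2)) by (apply Rmult_le_compat_l; nra).
      assert (0 <= Rabs b * c * (14/5 * (N * s) - 3 * Rabs a)) by (apply Rmult_le_pos; [apply Rmult_le_pos|]; lra).
      nra. }
    destruct (Rle_lt_dec y (PI/2)) as [R3 | R3].
    + apply Fin.
      assert (Ha0 : 0 <= a) by (apply sin_ge_0; lra).
      rewrite Rabs_pos_eq by lra.
      assert (Hau := sin_ub5 y ltac:(lra) ltac:(lra)). fold a in Hau.
      assert (h^2 <= y^2/9) by nra.
      assert (y - y^3/54 <= N*s) by nra.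
      assert (15/14 * (y - y^3/6 + y^5/120) <= y - y^3/54).
      { assert (0 <= (y^2 - 49/100) * (4 - y^2)) by (apply Rmult_le_pos; nra).
        assert (0 <= -1/14 + (15/84 - 1/54) * y^2 - y^4/112) by nra.
        assert (0 <= y * (-1/14 + (15/84 - 1/54) * y^2 - y^4/112)) by (apply Rmult_le_pos; lra).
        assert (E : y - y^3/54 - 15/14 * (y - y^3/6 + y^5/120) = y * (-1/14 + (15/84 - 1/54) * y^2 - y^4/112)) by field.
        lra. }
      nra.
    + destruct (Rle_lt_dec y PI) as [R5|R5].
      { assert (Ha0 : 0 <= a) by (apply sin_ge_0; lra).
        assert (b <= 0) by (apply cos_le_0; lra).
        assert (0 <= N * s * (c ^2 + 2 * b ^2)) by (apply Rmult_le_pos; nra).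
        assert (a * b * c <= 0).
        { assert (0 <= a * (- b) * c) by (apply Rmult_le_pos; [apply Rmult_le_pos|]; lra). nra. }
        nra. }
      apply Fin.
      assert (Rabs a <= 1) by (unfold a; destruct (SIN_bound y); apply Rabs_le; lra).
      assert (h^2 <= PI^2/4) by nra.
      assert (HP : PI^2 <= 16) by nra.
      assert (y * (1 - PI^2/24) <= y - y*h^2/6) by nra.
      assert (PI * (1 - PI^2/24) <= y * (1 - PI^2/24)) by (apply Rmult_le_compat_r; lra).
      assert (4/3 <= PI * (1 - PI^2/24)) by nra.
      nra.
Qed.

Lemma pyth x : sin x ^ 2 + cos x ^ 2 = 1.
Proof. rewrite <- (sin2_cos2 x). unfold Rsqr. ring. Qed.

Lemma mid_id m x : 2 * sin x * mid_sin_sum (m+2) x =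
  1 + cos x - cos (INR (m+2) * x) * (1 + cos x) - sin (INR (m+2) * x) * sin x - 2 * sin x ^ 2.
Proof.
  induction m as [|m IH].
  - simpl mid_sin_sum. replace (INR (0+2)) with 2 by (simpl; lra).
    rewrite cos_2a, sin_2a. apply Rminus_diag_uniq.
    transitivity ((1 + cos x) * (sin x ^ 2 + cos x ^ 2 - 1)); [ring| rewrite pyth; ring].
  - replace (S m + 2)%nat with (S (m+2)) by lia.
    cbn [mid_sin_sum].
    replace ((2 <=? m + 2)%nat) with true by (symmetry; apply Nat.leb_le; lia).
    rewrite S_INR. set (y := INR (m+2)) in *.
    rewrite Rmult_plus_distr_l, IH.
    replace ((y+1)*x) with (y*x + x) by ring.
    rewrite cos_plus, sin_plus. apply Rminus_diag_uniq.
    transitivity (cos (y*x) * (sin x ^ 2 + cos x ^ 2 - 1)); [ring| rewrite pyth; ring].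
Qed.

Lemma trig_id n k l x : (2 <= n)%nat ->
  2 * sin x * trig_poly n k l x =
  2 * (k - 1) * sin x ^ 2 + (1 + cos x) * (1 - cos (INR n * x)) + (2*l - 1) * sin x * sin (INR n * x).
Proof.
  intros Hn. replace n with ((n-2)+2)%nat by lia.
  unfold trig_poly.
  assert (H := mid_id (n-2) x).
  set (M := mid_sin_sum (n - 2 + 2) x) in *.
  set (C := cos (INR (n - 2 + 2) * x)) in *. set (S := sin (INR (n - 2 + 2) * x)) in *.
  transitivity (2*k*sin x^2 + 2*sin x*M + 2*l*sin x*S); [ring|]. rewrite H. ring.
Qed.

Lemma mid_zero n x : (forall m, sin (INR m * x) = 0) -> mid_sin_sum n x = 0.
Proof. intros H. induction n; cbn [mid_sin_sum]; [lra|]. rewrite IHn, H. destruct (2 <=? n)%nat; lra. Qed.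

Lemma sin_INR_PI m : sin (INR m * PI) = 0.
Proof. apply sin_eq_0_1. exists (Z.of_nat m). rewrite INR_IZR_INZ. reflexivity. Qed.

Lemma trig_0 n k l : trig_poly n k l 0 = 0.
Proof. unfold trig_poly. rewrite mid_zero by (intro; rewrite Rmult_0_r; apply sin_0).
  rewrite Rmult_0_r, sin_0. ring. Qed.

Lemma trig_PI n k l : trig_poly n k l PI = 0.
Proof. unfold trig_poly. rewrite mid_zero by apply sin_INR_PI.
  rewrite sin_INR_PI, sin_PI. ring. Qed.

Lemma sin_n_bound n x : 0 <= x <= PI -> Rabs (sin (INR n * x)) <= INR n * sin x.
Proof.
  intros Hx. assert (Hs : 0 <= sin x) by (apply sin_ge_0; lra).
  induction n.
  - simpl. rewrite Rmult_0_l, sin_0, Rabs_R0. lra.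
  - rewrite S_INR. replace ((INR n + 1) * x) with (INR n * x + x) by ring.
    rewrite sin_plus.
    assert (Rabs (sin (INR n * x) * cos x) <= Rabs (sin (INR n * x))).
    { rewrite Rabs_mult. pose proof (COS_bound x). 
      assert (Rabs (cos x) <= 1) by (apply Rabs_le; lra).
      pose proof (Rabs_pos (sin (INR n * x))). nra. }
    assert (Rabs (cos (INR n * x) * sin x) <= sin x).
    { rewrite Rabs_mult, (Rabs_pos_eq (sin x)) by lra. pose proof (COS_bound (INR n * x)).
      assert (Rabs (cos (INR n * x)) <= 1) by (apply Rabs_le; lra). nra. }
    pose proof (Rabs_triang (sin (INR n * x) * cos x) (cos (INR n * x) * sin x)). lra.
Qed.

Lemma shift_odd n d : Nat.Odd n ->
  cos (INR n * (PI - d)) = - cos (INR n * d) /\ sin (INR n * (PI - d)) = sin (INR n * d).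
Proof.
  intros [k Hk]. subst n.
  replace (INR (2*k+1) * (PI - d)) with ((PI - INR (2*k+1) * d) + 2 * INR k * PI)
    by (rewrite plus_INR, mult_INR; simpl; ring).
  rewrite cos_period, sin_period. rewrite cos_minus, sin_minus, cos_PI, sin_PI. split; ring.
Qed.

Lemma shift_even n d : Nat.Even n ->
  cos (INR n * (PI - d)) = cos (INR n * d) /\ sin (INR n * (PI - d)) = - sin (INR n * d).
Proof.
  intros [k Hk]. subst n.
  replace (INR (2*k) * (PI - d)) with ((- (INR (2*k) * d)) + 2 * INR k * PI)
    by (rewrite mult_INR; simpl; ring).
  rewrite cos_period, sin_period, cos_neg, sin_neg. split; ring.
Qed.

Lemma one_minus_cos_ub z : Rabs z <= 1 -> 0 <= 1 - cos z <= z^2/2.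
Proof.
  intros Hz. pose proof PI2_3_2. assert (-1 <= z <= 1) by (split; [pose proof (Rle_abs (-z)); rewrite Rabs_Ropp in *; lra | pose proof (Rle_abs z); lra]).
  pose proof (cos_lb6 z ltac:(lra) ltac:(lra)). pose proof (COS_bound z).
  assert (z^2 <= 1) by nra. assert (0 <= z^4) by (replace (z^4) with ((z^2)^2) by ring; apply pow2_ge_0).
  assert (z^6 <= z^4) by (replace (z^6) with (z^4 * z^2) by ring; nra).
  lra.
Qed.

Lemma LIM (N q eps : R) : 1 <= N -> 0 <= q -> 0 < eps ->
  exists u, 0 < u /\ N * u <= 1 /\
    (1 - cos u) * (1 - cos (N * u)) + q * sin u * (N * sin u - sin (N * u)) < 2 * eps * sin u ^ 2.
Proof.
  intros HN Hq He. pose proof PI2_3_2.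
  set (K := N^2/4 + q * N^3/6).
  assert (HK : 0 <= K) by (unfold K; assert (0 <= q * N^3) by (apply Rmult_le_pos; [lra| apply pow_le; lra]); nra).
  set (u := Rmin (1/N) (eps / (2*K+2))).
  assert (Hu1 : u <= 1/N) by apply Rmin_l.
  assert (Hu2 : u <= eps/(2*K+2)) by apply Rmin_r.
  assert (Hu0 : 0 < u) by (apply Rmin_glb_lt; apply Rdiv_lt_0_compat; lra).
  assert (HNu : N * u <= 1).
  { apply (Rmult_le_compat_l N) in Hu1; [|lra]. replace (N * (1/N)) with 1 in Hu1 by (field; lra). lra. }
  assert (Hu : u <= 1) by nra.
  exists u. split; [lra|split; [lra|]].
  destruct (one_minus_cos_ub u) as [C1 C2]; [rewrite Rabs_pos_eq; lra|].
  destruct (one_minus_cos_ub (N*u)) as [C3 C4]; [rewrite Rabs_pos_eq; nra|].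
  assert (S1 : sin u <= u) by (left; apply sin_lt_x; lra).
  assert (S2 := sin_lb3 u ltac:(lra) ltac:(lra)).
  assert (S3 := sin_lb3 (N*u) ltac:(nra) ltac:(nra)).
  assert (Hs0 : u/2 <= sin u) by nra.
  assert (Hsin : N * sin u - sin (N*u) <= N^3 * u^3 / 6) by nra.
  assert (HB : 0 <= N^3 * u^3/6) by (assert (0 <= N^3 * u^3) by (apply Rmult_le_pos; apply pow_le; lra); lra).
  assert (T1 : (1 - cos u) * (1 - cos (N * u)) <= u^2/2 * ((N*u)^2/2)).
  { apply Rmult_le_compat; lra. }
  assert (T2 : q * sin u * (N * sin u - sin (N * u)) <= q * u * (N^3 * u^3 / 6)).
  { assert (q * sin u * (N * sin u - sin (N * u)) <= q * sin u * (N^3 * u^3 / 6)) by (apply Rmult_le_compat_l; nra).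
    assert (q * sin u * (N^3 * u^3 / 6) <= q * u * (N^3 * u^3 / 6)) by (apply Rmult_le_compat_r; [lra| apply Rmult_le_compat_l; lra]).
    lra. }
  assert (T3 : u^2/2 * ((N*u)^2/2) + q * u * (N^3 * u^3 / 6) = u^4 * K) by (unfold K; field).
  assert (T4 : u * K <= eps * K / (2*K+2)).
  { apply (Rmult_le_compat_r K) in Hu2; [|lra]. replace (eps / (2 * K + 2) * K) with (eps * K / (2*K+2)) in Hu2 by (field; lra). lra. }
  assert (T5 : eps * K / (2*K+2) < eps / 2).
  { apply (Rmult_lt_reg_r (2*K+2)); [lra|]. replace (eps * K / (2*K+2) * (2*K+2)) with (eps*K) by (field; lra). nra. }
  assert (T6 : u^2 * K < eps/2).
  { assert (u^2 * K <= u * K) by (replace (u^2*K) with (u * (u*K)) by ring; assert (0 <= u*K) by nra; nra). lra. }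
  assert (T7 : u^4 * K < eps/2 * u^2) by (replace (u^4*K) with (u^2 * (u^2*K)) by ring; assert (0 < u^2) by nra; nra).
  assert (T8 : eps/2 * u^2 <= 2 * eps * sin u ^2).
  { assert ((u/2)^2 <= sin u ^2) by (apply pow_incr; lra). nra. }
  lra.
Qed.
Lemma STRICT (N p : R) : 3 <= N -> 0 <= p -> p < 3/(2*N) ->
  exists u, 0 < u /\ N * u <= 1 /\
    (1 - cos u) * (cos (N * u) - cos u) + p * sin u * (N * sin u - sin (N * u)) < 0.
Proof.
  intros HN Hp Hp2. pose proof PI2_3_2.
  set (th := 2 * p * N / 3).
  assert (Hth : 0 <= th < 1).
  { unfold th. split. { assert (0 <= p*N) by nra. lra. }
    apply (Rmult_lt_compat_r (2*N/3)) in Hp2; [|lra].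
    replace (3/(2*N) * (2*N/3)) with 1 in Hp2 by (field; lra). lra. }
  set (rho := 1 - th).
  set (u := rho / N).
  assert (HNu : N * u = rho) by (unfold u; field; lra).
  assert (Hu0 : 0 < u) by (unfold u; apply Rdiv_lt_0_compat; unfold rho; lra).
  assert (Hr : 0 < rho <= 1) by (unfold rho; lra).
  assert (Hu1 : u <= 1/3) by (unfold u; apply (Rmult_le_reg_l N); [lra|]; replace (N * (rho/N)) with rho by (field; lra); lra).
  assert (Hpth : p = 3 * th / (2 * N)) by (unfold th; field; lra).
  exists u. split; [lra| split; [lra|]].
  set (w := u^2).
  assert (HNw : N^2 * w = rho^2) by (unfold w; rewrite <- HNu; ring).
  assert (Hw0 : 0 < w) by (unfold w; nra).
  assert (Hw1 : w <= rho^2/9).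
  { assert (9 <= N^2) by nra. assert (9 * w <= N^2 * w) by (apply Rmult_le_compat_r; lra). lra. }
  set (A := N^2 - 1).
  assert (HA : 8 <= A) by (unfold A; nra).
  assert (S1 : sin u <= u) by (left; apply sin_lt_x; lra).
  assert (S0 : 0 <= sin u) by (apply sin_ge_0; lra).
  assert (S2 := sin_ub5 u ltac:(lra) ltac:(lra)).
  assert (S3 := sin_lb3 (N*u) ltac:(nra) ltac:(nra)).
  set (B := N * A * u^3/6 + N * u^5/120).
  assert (HB0 : 0 <= B) by (unfold B; assert (0 <= N*A*u^3) by (apply Rmult_le_pos; [nra|apply pow_le; lra]);
     assert (0 <= N*u^5) by (apply Rmult_le_pos; [lra|apply pow_le; lra]); lra).
  assert (HB : N * sin u - sin (N * u) <= B).
  { unfold B, A. assert (N * sin u <= N * (u - u^3/6 + u^5/120)) by (apply Rmult_le_compat_l; lra).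
    assert (E : N * (u - u^3/6 + u^5/120) - (N*u - (N*u)^3/6) = (N * (N^2 - 1) * u^3/6 + N * u^5/120)) by field.
    lra. }
  assert (C1 := cos_lb6 u ltac:(lra) ltac:(lra)).
  assert (C2 := cos_ub4 u ltac:(lra) ltac:(lra)).
  assert (C3 := cos_ub4 (N*u) ltac:(nra) ltac:(nra)).
  set (G := w/2 - w^2/24).
  set (D := A * w/2 - (N^4 - 1) * w^2/24 - w^3/720).
  assert (HG : G <= 1 - cos u) by (unfold G, w; lra).
  assert (HD : D <= cos u - cos (N*u)).
  { unfold D, A, w. assert (E : (1 - u^2/2 + u^4/24 - u^6/720) - (1 - (N*u)^2/2 + (N*u)^4/24) =
       (N^2 - 1) * u^2/2 - (N^4 - 1) * (u^2)^2/24 - (u^2)^3/720) by field. lra. }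
  assert (Hw9 : w <= 1/9) by nra.
  assert (HG0 : 0 <= G) by (unfold G; assert (w^2 <= w * (1/9)) by (replace (w^2) with (w*w) by ring; apply Rmult_le_compat_l; lra); lra).
  assert (HN4 : (N^4 - 1) * w^2 = A * (rho^2 + w) * w).
  { unfold A. replace (N^4) with (N^2*N^2) by ring. rewrite <- HNw. ring. }
  assert (HD1 : A * (1/2 - rho^2/20) * w <= D).
  { unfold D. rewrite HN4.
    assert (A * (rho^2 + w) * w / 24 <= A * (10/9 * rho^2) * w / 24).
    { apply Rmult_le_compat_r; [lra|]. apply Rmult_le_compat_r; [lra|]. apply Rmult_le_compat_l; lra. }
    assert (w^3/720 <= A * rho^2 * w / 720).
    { replace (w^3) with (w^2 * w) by ring. apply Rmult_le_compat_r; [lra|]. apply Rmult_le_compat_r; [lra|].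
      assert (w^2 <= rho^2 * (1/9)) by (replace (w^2) with (w*w) by ring; assert (w <= 1/9) by nra; nra). nra. }
    nra. }
  assert (HD0 : 0 <= A * (1/2 - rho^2/20) * w) by (apply Rmult_le_pos; [apply Rmult_le_pos|]; nra).
  assert (LHSb : (1 - cos u) * (cos u - cos (N * u)) >= G * (A * (1/2 - rho^2/20) * w)).
  { apply Rle_ge. apply Rmult_le_compat; lra. }
  assert (RHSb : p * sin u * (N * sin u - sin (N * u)) <= p * u * B).
  { assert (p * sin u * (N * sin u - sin (N * u)) <= p * sin u * B) by (apply Rmult_le_compat_l; nra).
    assert (p * sin u * B <= p * u * B) by (apply Rmult_le_compat_r; [lra|apply Rmult_le_compat_l; lra]). lra. }
  assert (EpB : p * u * B = w^2 * (th * A / 4 + th * w / 80)).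
  { unfold B, w. rewrite Hpth. field. lra. }
  assert (Fin : w^2 * (th * A / 4 + th * w / 80) < G * (A * (1/2 - rho^2/20) * w)).
  { unfold G. 
    assert (E2 : (w / 2 - w ^ 2 / 24) * (A * (1 / 2 - rho ^ 2 / 20) * w) = w^2 * ((1/2 - w/24) * (A * (1/2 - rho^2/20)))) by field.
    rewrite E2. apply Rmult_lt_compat_l; [nra|].
    assert (A * (1/4 - rho^2/36) <= (1/2 - w/24) * (A * (1/2 - rho^2/20))).
    { assert (1/2 - rho^2/216 <= 1/2 - w/24) by lra.
      assert (0 <= A * (1/2 - rho^2/20)) by nra.
      assert ((1/2 - rho^2/216) * (A * (1/2 - rho^2/20)) <= (1/2 - w/24) * (A * (1/2 - rho^2/20))) by (apply Rmult_le_compat_r; lra).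
      assert (A * (1/4 - rho^2/36) <= (1/2 - rho^2/216) * (A * (1/2 - rho^2/20))).
      { assert (E3 : (1/2 - rho^2/216) * (A * (1/2 - rho^2/20)) - A * (1/4 - rho^2/36) = A * (rho^2 * (1/36 - 1/40 - 1/432) + rho^4/4320)) by field.
        assert (0 <= rho^4) by (apply pow_le; lra).
        assert (0 <= A * (rho^2 * (1/36 - 1/40 - 1/432) + rho^4/4320)) by (apply Rmult_le_pos; nra). lra. }
      lra. }
    assert (th * w / 80 <= A * rho^2 / 5760).
    { assert (th * w <= 1 * (rho^2/9)) by (apply Rmult_le_compat; lra). nra. }
    assert (th = 1 - rho) by (unfold rho; ring).
    assert (A * rho^2 * (1/36 + 1/5760) < A * rho / 4) by nra.
    nra. }
  lra.
Qed.
Lemma sin_lower a y : 0 < a <= PI/2 -> a <= y <= PI - a -> sin a <= sin y.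
Proof.
  intros Ha Hy. destruct (Rle_lt_dec y (PI/2)).
  - apply sin_incr_1; lra.
  - rewrite <- (sin_PI_x y). apply sin_incr_1; lra.
Qed.

Lemma WIT (N q : R) : 3 <= N -> q <> 0 ->
  exists x, 0 < x < PI /\ (1 + cos x) * (1 - cos (N * x)) + q * sin x * sin (N * x) < 0.
Proof.
  intros HN Hq. pose proof PI2_3_2. pose proof PI_4.
  set (s0 := sin (PI/(2*N))).
  assert (Hs0 : 0 < s0) by (apply sin_gt_0; [apply Rdiv_lt_0_compat; lra|];
     apply (Rmult_lt_reg_r (2*N)); [lra|]; replace (PI / (2 * N) * (2 * N)) with PI by (field; lra); nra).
  assert (Hqa : 0 < Rabs q) by (apply Rabs_pos_lt; auto).
  set (r := Rmin (1/2) (Rabs q * s0 / 4)).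
  assert (Hr1 : r <= 1/2) by apply Rmin_l.
  assert (Hr2 : r <= Rabs q * s0 / 4) by apply Rmin_r.
  assert (Hr0 : 0 < r) by (apply Rmin_glb_lt; [lra|]; apply Rdiv_lt_0_compat; [nra|lra]).
  set (sg := if Rlt_dec 0 q then -1 else 1).
  assert (Hsg : sg * q = - Rabs q /\ sg^2 = 1).
  { unfold sg. destruct (Rlt_dec 0 q).
    - rewrite Rabs_pos_eq by lra. split; ring.
    - rewrite Rabs_left by lra. split; ring. }
  set (x := (2 * PI + sg * r) / N).
  assert (HNx : N * x = 2 * PI + sg * r) by (unfold x; field; lra).
  assert (Hsgr : sg * r <= 1/2 /\ - (1/2) <= sg * r) by (unfold sg; destruct (Rlt_dec 0 q); lra).
  assert (Hx1 : PI / (2*N) <= x <= PI - PI/(2*N)).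
  { unfold x. split.
    - apply (Rmult_le_reg_r N); [lra|]. replace (PI / (2 * N) * N) with (PI/2) by (field; lra).
      replace ((2 * PI + sg * r) / N * N) with (2 * PI + sg * r) by (field; lra). lra.
    - apply (Rmult_le_reg_r N); [lra|]. replace ((PI - PI / (2 * N)) * N) with (PI * N - PI/2) by (field; lra).
      replace ((2 * PI + sg * r) / N * N) with (2 * PI + sg * r) by (field; lra). nra. }
  assert (Ha : 0 < PI/(2*N) <= PI/2).
  { split. apply Rdiv_lt_0_compat; lra. apply (Rmult_le_reg_r (2*N)); [lra|].
    replace (PI / (2 * N) * (2 * N)) with PI by (field; lra). nra. }
  assert (Hsx : s0 <= sin x) by (apply sin_lower; lra).
  exists x. split; [split; lra|].
  rewrite HNx, cos_plus, sin_plus, cos_2PI, sin_2PI.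
  replace (cos (sg * r)) with (cos r) by (unfold sg; destruct (Rlt_dec 0 q); [rewrite <- (cos_neg r); f_equal; ring| f_equal; ring]).
  replace (sin (sg * r)) with (sg * sin r) by (unfold sg; destruct (Rlt_dec 0 q); cbn; [assert (E: -1 * r = - r) by ring; rewrite E, sin_neg; ring | rewrite !Rmult_1_l; reflexivity]).
  destruct (one_minus_cos_ub r) as [C1 C2]; [rewrite Rabs_pos_eq; lra|].
  assert (S1 := sin_lb3 r ltac:(lra) ltac:(lra)).
  assert (Hsr : r/2 <= sin r) by nra.
  pose proof (COS_bound x).
  assert (T1 : (1 + cos x) * (1 - cos r) <= 2 * (r^2/2)) by (apply Rmult_le_compat; lra).
  assert (T2 : q * sin x * (0 * cos r + 1 * (sg * sin r)) = - Rabs q * sin x * sin r).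
  { destruct Hsg as [E1 _]. rewrite <- E1. ring. }
  rewrite T2.
  assert (T3 : Rabs q * s0 * (r/2) <= Rabs q * sin x * sin r).
  { apply Rmult_le_compat; try nra. }
  assert (T4 : r^2 < Rabs q * s0 * (r / 2)).
  { assert (r < Rabs q * s0 / 2) by lra. nra. }
  replace (1 - (1 * cos r - 0 * sin r)) with (1 - cos r) by ring.
  lra.
Qed.

Definition Num n l x := (1 + cos x) * (1 - cos (INR n * x)) + (2*l - 1) * sin x * sin (INR n * x).
Definition V n l x := 1 - Num n l x / (2 * sin x ^ 2).

Lemma V_le n l x b : 0 < sin x -> (V n l x <= b <-> 2 * sin x ^ 2 * (1 - b) <= Num n l x).
Proof.
  intros Hs. unfold V. assert (HD : 0 < 2 * sin x ^ 2) by nra.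
  set (D := 2 * sin x ^ 2) in *. set (M := Num n l x).
  assert (E : M / D * D = M) by (field; lra).
  split; intro H.
  - assert (1 - b <= M / D) by lra. apply (Rmult_le_compat_r D) in H0; lra.
  - assert ((1 - b) * D <= M / D * D) by lra. apply Rmult_le_reg_r in H0; lra.
Qed.

Lemma V_gt n l x b : 0 < sin x -> (b < V n l x <-> Num n l x < 2 * sin x ^ 2 * (1 - b)).
Proof.
  intros Hs. split; intro H.
  - destruct (Rlt_dec (Num n l x) (2 * sin x ^ 2 * (1 - b))); auto.
    exfalso. assert (V n l x <= b) by (apply V_le; lra). lra.
  - destruct (Rle_dec (V n l x) b); [|lra].
    apply V_le in r; lra.
Qed.

Lemma in_Pn_iff n k l : (2 <= n)%nat ->
  (in_Pn n k l <-> forall x, 0 < x < PI -> V n l x <= k).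
Proof.
  intros Hn. split.
  - intros H x Hx. assert (Hs : 0 < sin x) by (apply sin_gt_0; lra).
    apply V_le; auto. specialize (H x ltac:(lra)).
    pose proof (trig_id n k l x Hn). unfold Num. nra.
  - intros H x Hx. destruct (Req_dec x 0) as [->|H0]; [rewrite trig_0; lra|].
    destruct (Req_dec x PI) as [->|H1]; [rewrite trig_PI; lra|].
    assert (Hs : 0 < sin x) by (apply sin_gt_0; lra).
    specialize (H x ltac:(lra)). apply V_le in H; auto.
    pose proof (trig_id n k l x Hn). unfold Num in H.
    assert (0 <= 2 * sin x * trig_poly n k l x) by nra.
    nra.
Qed.

Lemma key_x n x : (3 <= n)%nat -> Nat.Odd n -> 0 < x < PI ->
  0 <= 2 * INR n * (1 + cos x) * (1 - cos (INR n * x)) + INR n * sin x ^ 2 - 3 * sin x * sin (INR n * x).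
Proof.
  intros Hn Ho Hx. set (h := (PI - x)/2).
  assert (Hh : 0 < h < PI/2) by (unfold h; lra).
  assert (Ex : x = PI - 2 * h) by (unfold h; field).
  destruct (shift_odd n (2*h) Ho) as [E1 E2].
  rewrite Ex, E1, E2. rewrite (sin_PI_x (2*h)).
  replace (cos (PI - 2*h)) with (- cos (2*h)) by (rewrite cos_minus, cos_PI, sin_PI; ring).
  pose proof (key_P n h Hn Hh) as KP.
  assert (Hs : 0 < sin h) by (apply sin_gt_0; lra).
  replace (INR n * (2*h)) with (2 * (INR n * h)) by ring.
  rewrite sin_2a, sin_2a, cos_2a_sin, cos_2a_cos.
  set (N := INR n) in *. set (y := N * h) in *.
  assert (E : 2 * N * (1 + - (1 - 2 * sin h * sin h)) * (1 - - (2 * cos y * cos y - 1)) +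
    N * (2 * sin h * cos h) ^ 2 - 3 * (2 * sin h * cos h) * (2 * sin y * cos y) =
    4 * sin h * (N * sin h * (cos h ^ 2 + 2 * cos y ^ 2) - 3 * sin y * cos y * cos h)) by ring.
  rewrite E. apply Rmult_le_pos; lra.
Qed.

Theorem theorem4 (n : nat) (Hn : (3 <= n)%nat) (lambda : R) :
  exists kappa0 : R,
    (forall kappa : R, in_Pn n kappa lambda <-> kappa0 <= kappa) /\
    (Nat.Odd n ->
       (lambda <= (2 * INR n - 3) / (4 * INR n) ->
          kappa0 = (INR n + 1) / 2 - INR n * lambda) /\
       ((2 * INR n - 3) / (4 * INR n) < lambda <= 1 / 2 ->
          kappa0 > (INR n + 1) / 2 - INR n * lambda) /\
       (1 / 2 < lambda -> kappa0 > 1)) /\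
    (Nat.Even n ->
       (lambda < 1 / 2 -> kappa0 > 1) /\
       (1 / 2 <= lambda -> kappa0 = INR n * lambda - (INR n - 2) / 2)).
Proof.
  assert (Hn2 : (2 <= n)%nat) by lia.
  assert (HN : 3 <= INR n) by (replace 3 with (INR 3) by (simpl; lra); apply le_INR; lia).
  pose proof PI2_3_2 as Pl. pose proof PI_4 as Pu.
  set (q := 2 * lambda - 1).
  set (E := fun v => exists x, 0 < x < PI /\ v = V n lambda x).
  assert (Hbd : forall x, 0 < x < PI -> V n lambda x <= 1 + INR n * Rabs q / 2).
  { intros x Hx. assert (Hs : 0 < sin x) by (apply sin_gt_0; lra).
    apply V_le; auto. unfold Num. fold q.
    pose proof (COS_bound x). pose proof (COS_bound (INR n * x)).
    assert (0 <= (1 + cos x) * (1 - cos (INR n * x))) by (apply Rmult_le_pos; lra).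
    pose proof (sin_n_bound n x ltac:(lra)) as SB.
    assert (- (Rabs q * (INR n * sin x)) <= q * sin (INR n * x)).
    { assert (Rabs (q * sin (INR n * x)) <= Rabs q * (INR n * sin x)).
      { rewrite Rabs_mult. apply Rmult_le_compat_l; [apply Rabs_pos| auto]. }
      pose proof (Rle_abs (- (q * sin (INR n * x)))). rewrite Rabs_Ropp in H3. lra. }
    assert (- (Rabs q * (INR n * sin x)) * sin x <= q * sin (INR n * x) * sin x) by (apply Rmult_le_compat_r; lra).
    nra. }
  assert (HB : bound E).
  { exists (1 + INR n * Rabs q / 2). intros v [x [Hx ->]]. auto. }
  assert (HE : exists v, E v).
  { exists (V n lambda (PI/2)). exists (PI/2). split; [lra|auto]. }
  destruct (completeness E HB HE) as [k0 [Hub Hlub]].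
  assert (Hub' : forall x, 0 < x < PI -> V n lambda x <= k0).
  { intros x Hx. apply Hub. exists x. auto. }
  assert (Hlub' : forall b, (forall x, 0 < x < PI -> V n lambda x <= b) -> k0 <= b).
  { intros b Hb. apply Hlub. intros v [x [Hx ->]]. auto. }
  assert (EQ : forall c, (forall x, 0 < x < PI -> V n lambda x <= c) ->
     (forall eps, 0 < eps -> exists x, 0 < x < PI /\ c - eps < V n lambda x) -> k0 = c).
  { intros c H1 H2. assert (k0 <= c) by auto.
    destruct (Rle_lt_dec c k0); [lra|].
    destruct (H2 (c - k0) ltac:(lra)) as [x [Hx Hv]]. specialize (Hub' x Hx). lra. }
  assert (GT : forall c, (exists x, 0 < x < PI /\ c < V n lambda x) -> k0 > c).
  { intros c [x [Hx Hv]]. specialize (Hub' x Hx). lra. }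
  set (N := INR n) in *.
  set (t := 3 / (4 * N)).
  assert (Ht : 0 < t) by (unfold t; apply Rdiv_lt_0_compat; lra).
  assert (Hthr : (2 * N - 3) / (4 * N) = 1/2 - t) by (unfold t; field; lra).
  assert (H32 : 3 / (2 * N) = 2 * t) by (unfold t; field; lra).
  assert (W1 : q <> 0 -> k0 > 1).
  { intros Hq. apply GT. destruct (WIT N q HN Hq) as [x [Hx Hneg]].
    exists x. split; auto. assert (Hs : 0 < sin x) by (apply sin_gt_0; lra).
    apply V_gt; auto. unfold Num. fold q. fold N. lra. }
  exists k0. split; [|split].
  - intro k. split; intro H.
    + apply Hlub'. apply (proj1 (in_Pn_iff n k lambda Hn2)). exact H.
    + apply (proj2 (in_Pn_iff n k lambda Hn2)). intros x Hx. specialize (Hub' x Hx). lra.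
  - intros Ho. split; [|split].
    + intros Hl. rewrite Hthr in Hl. apply EQ.
      * intros x Hx. assert (Hs : 0 < sin x) by (apply sin_gt_0; lra).
        apply V_le; auto. unfold Num. fold q. fold N.
        pose proof (key_x n x Hn Ho Hx) as K. fold N in K.
        pose proof (sin_n_bound n x ltac:(lra)) as SB. fold N in SB.
        set (S := sin (N * x)) in *. set (s := sin x) in *.
        assert (S <= N * s) by (pose proof (Rle_abs S); lra).
        assert (0 <= (- (q + 2 * t)) * (s * (N * s - S))) by (apply Rmult_le_pos; [unfold q; lra| apply Rmult_le_pos; lra]).
        assert (EE : (1 + cos x) * (1 - cos (N * x)) + q * s * S - 2 * s ^ 2 * (1 - ((N + 1) / 2 - N * lambda))
           = (2 * N * (1 + cos x) * (1 - cos (N * x)) + N * s ^ 2 - 3 * s * S) / (2 * N)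
             + (- (q + 2 * t)) * (s * (N * s - S))) by (unfold q, t; field; lra).
        assert (0 <= (2 * N * (1 + cos x) * (1 - cos (N * x)) + N * s ^ 2 - 3 * s * S) / (2 * N))
          by (unfold Rdiv; apply Rmult_le_pos; [lra| left; apply Rinv_0_lt_compat; lra]).
        lra.
      * intros eps Heps. destruct (LIM N (-q) eps ltac:(lra) ltac:(unfold q; lra) Heps) as [u [Hu0 [HNu Hlt]]].
        assert (Hu : u <= 1/3) by (apply (Rmult_le_reg_l 3); [lra|]; nra).
        exists (PI - u). split; [lra|].
        assert (Hs : 0 < sin (PI - u)) by (apply sin_gt_0; lra).
        apply V_gt; auto. unfold Num. fold q. fold N.
        destruct (shift_odd n u Ho) as [E1 E2]. fold N in E1, E2. rewrite E1, E2, sin_PI_x.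
        replace (cos (PI - u)) with (- cos u) by (rewrite cos_minus, cos_PI, sin_PI; ring).
        assert (Hcm : cos (N * u) <= cos u) by (apply cos_decr_1; nra).
        pose proof (COS_bound u). pose proof (COS_bound (N*u)).
        assert ((1 - cos u) * (cos (N * u) - cos u) <= (1 - cos u) * (1 - cos (N * u))).
        { assert ((1 - cos u) * (cos (N * u) - cos u) <= 0) by (assert (0 <= (1 - cos u) * (cos u - cos (N * u))) by (apply Rmult_le_pos; lra); nra).
          assert (0 <= (1 - cos u) * (1 - cos (N * u))) by (apply Rmult_le_pos; lra). lra. }
        assert (Pyt := pyth u).
        assert (EE : (1 + - cos u) * (1 - - cos (N * u)) + q * sin u * sin (N * u) -
             2 * sin u ^ 2 * (1 - ((N + 1) / 2 - N * lambda - eps)) =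
             (1 - cos u) * (cos (N * u) - cos u) + - q * sin u * (N * sin u - sin (N * u)) - 2 * eps * sin u ^2
             - (sin u ^ 2 + cos u ^ 2 - 1)) by (unfold q; field).
        rewrite Pyt in EE. lra.
    + intros [Hl1 Hl2]. rewrite Hthr in Hl1. apply GT.
      destruct (STRICT N (-q) HN ltac:(unfold q; lra) ltac:(rewrite H32; unfold q; lra)) as [u [Hu0 [HNu Hlt]]].
      assert (Hu : u <= 1/3) by (apply (Rmult_le_reg_l 3); [lra|]; nra).
      exists (PI - u). split; [lra|].
      assert (Hs : 0 < sin (PI - u)) by (apply sin_gt_0; lra).
      apply V_gt; auto. unfold Num. fold q. fold N.
      destruct (shift_odd n u Ho) as [E1 E2]. fold N in E1, E2. rewrite E1, E2, sin_PI_x.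
      replace (cos (PI - u)) with (- cos u) by (rewrite cos_minus, cos_PI, sin_PI; ring).
      assert (Pyt := pyth u).
      assert (EE : (1 + - cos u) * (1 - - cos (N * u)) + q * sin u * sin (N * u) -
             2 * sin u ^ 2 * (1 - ((N + 1) / 2 - N * lambda)) =
             (1 - cos u) * (cos (N * u) - cos u) + - q * sin u * (N * sin u - sin (N * u))
             - (sin u ^ 2 + cos u ^ 2 - 1)) by (unfold q; field).
      rewrite Pyt in EE. lra.
    + intros Hl. apply W1. unfold q. lra.
  - intros He. split.
    + intros Hl. apply W1. unfold q. lra.
    + intros Hl. apply EQ.
      * intros x Hx. assert (Hs : 0 < sin x) by (apply sin_gt_0; lra).
        apply V_le; auto. unfold Num. fold q. fold N.
        pose proof (sin_n_bound n x ltac:(lra)) as SB. fold N in SB.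
        set (S := sin (N * x)) in *. set (s := sin x) in *.
        assert (- S <= N * s) by (pose proof (Rle_abs (-S)); rewrite Rabs_Ropp in *; lra).
        pose proof (COS_bound x). pose proof (COS_bound (N*x)).
        assert (0 <= (1 + cos x) * (1 - cos (N * x))) by (apply Rmult_le_pos; lra).
        assert (0 <= q * (s * (S + N * s))) by (apply Rmult_le_pos; [unfold q; lra| apply Rmult_le_pos; lra]).
        assert (EE : (1 + cos x) * (1 - cos (N * x)) + q * s * S - 2 * s ^ 2 * (1 - (N * lambda - (N - 2) / 2))
           = (1 + cos x) * (1 - cos (N * x)) + q * (s * (S + N * s))) by (unfold q; field).
        lra.
      * intros eps Heps. destruct (LIM N q eps ltac:(lra) ltac:(unfold q; lra) Heps) as [u [Hu0 [HNu Hlt]]].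
        assert (Hu : u <= 1/3) by (apply (Rmult_le_reg_l 3); [lra|]; nra).
        exists (PI - u). split; [lra|].
        assert (Hs : 0 < sin (PI - u)) by (apply sin_gt_0; lra).
        apply V_gt; auto. unfold Num. fold q. fold N.
        destruct (shift_even n u He) as [E1 E2]. fold N in E1, E2. rewrite E1, E2, sin_PI_x.
        replace (cos (PI - u)) with (- cos u) by (rewrite cos_minus, cos_PI, sin_PI; ring).
        assert (EE : (1 + - cos u) * (1 - cos (N * u)) + q * sin u * - sin (N * u) -
             2 * sin u ^ 2 * (1 - (N * lambda - (N - 2) / 2 - eps)) =
             (1 - cos u) * (1 - cos (N * u)) + q * sin u * (N * sin u - sin (N * u)) - 2 * eps * sin u ^2)
           by (unfold q; field).
        lra.
Qed.
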